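(* In the discrete torus model with frame group $\mathbb{Z}_4$ and calculus $\{\bar1,\bar3\}$ (context), assume the reality condition $\overline{\Theta_a}=R_a\Theta_a$ ($a=1,2$). Then a torsion-free cotorsion-free connection (parametrised by $a,b$) satisfies the reality condition $A_{\bar1}^*=A_{\bar3}$ if and only if $\bar a=R_2a$ and $\bar b=R_1b$. Under these conditions the regularity condition $s_1\bar\partial^2a-s_2\bar\partial^1b=0$ is invariant under complex conjugation, and the function \[R=\partial^1b+\partial^2a+s_1R_1b+s_2R_2a-2bR_1b-2aR_2a\] satisfies $\bar R=R+\bar\partial^1\big(\partial^1b+s_1R_1b\big)+\bar\partial^2\big(\partial^2a+s_2R_2a\big)$; in particular $\sum_{x\in\Sigma}R(x)$ is real.
   Context: Discrete torus model: $\Sigma=\mathbb{Z}_2\times\mathbb{Z}_2$, $x\to y$ iff $y-x\in\{(1,0),(0,1)\}$; diagonal zweibein $e_{1,x,x+(1,0)}=\Theta_1(x)^{-1}$, $e_{2,x,x+(0,1)}=\Theta_2(x)^{-1}$, $\Theta_a$ nowhere-vanishing with $\Theta_1R_1\Theta_2=\Theta_2R_2\Theta_1$; $R_1f(x)=f(x+(1,0))$, $R_2f(x)=f(x+(0,1))$, $\bar\partial^a=R_a-\mathrm{id}$, $\partial^a=\Theta_a\bar\partial^a$, $s_1=\bar\partial^2\Theta_1$, $s_2=\bar\partial^1\Theta_2$; $e_af=R_a(f)e_a$, $\mathrm{d}f=\sum_a(\partial^af)e_a$. Frame group $\mathbb{Z}_4$ acting by quarter rotations with calculus $\{\bar1,\bar3\}$;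 the torsion-free cotorsion-free connections are $A_{\bar1}=(-\alpha-\frac{s_1}{2})e_1+(\beta-\frac{s_2}{2})e_2$, $A_{\bar3}=(\beta-\frac{s_1}{2})e_1+(\alpha-\frac{s_2}{2})e_2$ with $a=\alpha+\beta$, $b=\beta-\alpha$ satisfying $(R_1+R_2)a=(R_1+R_2)b=0$. The $*$-structure: complex conjugation $f\mapsto\bar f$ on functions, extended antilinearly and antimultiplicatively to forms with $e_a^*=e_a$, so $(fe_a)^*=e_a\bar f=R_a(\bar f)e_a$. The reality condition $\theta^*=\theta$ for $\theta=\Theta_1e_1+\Theta_2e_2$ is $\overline{\Theta_a}=R_a\Theta_a$; the reality condition on spin connections is $A_i^*=A_{i^{-1}}$, here $A_{\bar1}^*=A_{\bar3}$. *)

(* Defs.v *)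
From HB Require Import structures.
From mathcomp Require Import all_boot all_order all_algebra.
Set Implicit Arguments. Unset Strict Implicit. Unset Printing Implicit Defensive.
Import Order.TTheory GRing.Theory Num.Theory.
Local Open Scope ring_scope.

(* Discrete torus Sigma = Z_2 x Z_2; functions Sigma -> C, with C any
   numClosedFieldType (e.g. complex numbers), conjugation = Num.conj (x^* ). *)
Definition Sigma : finType := ('Z_2 * 'Z_2)%type.

Section Torus.
Variable C : numClosedFieldType.
Definition fn := Sigma -> C.

Definition R1 (f : fn) : fn := fun x => f (x.1 + 1, x.2).
Definition R2 (f : fn) : fn := fun x => f (x.1, x.2 + 1).
Definition fconj (f : fn) : fn := fun x => (f x)^*.
Definition dbar1 (f : fn) : fn := fun x => R1 f x - f x.
Definition dbar2 (f : fn) : fn := fun x => R2 f x - f x.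
Definition d1 (Th1 f : fn) : fn := fun x => Th1 x * dbar1 f x.
Definition d2 (Th2 f : fn) : fn := fun x => Th2 x * dbar2 f x.
Definition s1 (Th1 : fn) : fn := dbar2 Th1.
Definition s2 (Th2 : fn) : fn := dbar1 Th2.

(* a 1-form f1 e1 + f2 e2 (coefficients on the left) as the pair (f1, f2) *)
Definition form := (fn * fn)%type.
(* (f e_a)^* = e_a conj f = R_a(conj f) e_a *)
Definition form_star (A : form) : form := (R1 (fconj A.1), R2 (fconj A.2)).

(* alpha, beta from a = alpha + beta, b = beta - alpha *)
Definition alpha (a b : fn) : fn := fun x => (a x - b x) / 2%:R.
Definition beta (a b : fn) : fn := fun x => (a x + b x) / 2%:R.

Definition conn_A1 (Th1 Th2 a b : fn) : form :=
  (fun x => - alpha a b x - s1 Th1 x / 2%:R,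
   fun x => beta a b x - s2 Th2 x / 2%:R).
Definition conn_A3 (Th1 Th2 a b : fn) : form :=
  (fun x => beta a b x - s1 Th1 x / 2%:R,
   fun x => alpha a b x - s2 Th2 x / 2%:R).

Definition regularity (Th1 Th2 a b : fn) : fn :=
  fun x => s1 Th1 x * dbar2 a x - s2 Th2 x * dbar1 b x.

Definition Rfun (Th1 Th2 a b : fn) : fn :=
  fun x => d1 Th1 b x + d2 Th2 a x + s1 Th1 x * R1 b x + s2 Th2 x * R2 a x
           - 2%:R * b x * R1 b x - 2%:R * a x * R2 a x.
End Torus.

(* Main.v *)
Require Import Defs.
From HB Require Import structures.
From mathcomp Require Import all_boot all_order all_algebra.
From mathcomp Require Import ring.
From Stdlib Require Import FunctionalExtensionality.
Import Order.TTheory GRing.Theory Num.Theory.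
Local Open Scope ring_scope.

Lemma z2_11 (z : 'Z_2) : z + 1 + 1 = z.
Proof. rewrite -addrA; have -> : (1 + 1 : 'Z_2) = 0 by apply/val_inj. by rewrite addr0. Qed.

Section Cj.
Variable C : numClosedFieldType.
Lemma cjB (x y : C) : (x - y)^* = x^* - y^*. Proof. exact: rmorphB. Qed.
Lemma cjD (x y : C) : (x + y)^* = x^* + y^*. Proof. exact: rmorphD. Qed.
Lemma cjM (x y : C) : (x * y)^* = x^* * y^*. Proof. exact: rmorphM. Qed.
Lemma cjN (x : C) : (- x)^* = - x^*. Proof. exact: rmorphN. Qed.
Lemma cjn (n : nat) : (n%:R : C)^* = n%:R. Proof. exact: rmorph_nat. Qed.
Lemma cj1 : (1 : C)^* = 1. Proof. exact: rmorph1. Qed.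
Lemma cjV (x : C) : (x^-1)^* = (x^*)^-1. Proof. exact: fmorphV. Qed.
Lemma cjsum (F : Sigma -> C) : (\sum_x F x)^* = \sum_x (F x)^*.
Proof. exact: rmorph_sum. Qed.
Lemma sum_dbar1 (f : fn C) : \sum_x dbar1 f x = 0.
Proof.
rewrite /dbar1 sumrB /R1.
have inj : injective (fun x : Sigma => (x.1 + 1, x.2)).
  by apply: (can_inj (g := fun x : Sigma => (x.1 + 1, x.2))) => -[i j] /=; rewrite z2_11.
by rewrite [X in _ - X](reindex_inj inj) subrr.
Qed.
Lemma sum_dbar2 (f : fn C) : \sum_x dbar2 f x = 0.
Proof.
rewrite /dbar2 sumrB /R2.
have inj : injective (fun x : Sigma => (x.1, x.2 + 1)).
  by apply: (can_inj (g := fun x : Sigma => (x.1, x.2 + 1))) => -[i j] /=; rewrite z2_11.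
by rewrite [X in _ - X](reindex_inj inj) subrr.
Qed.
Lemma solve_ab (A B a0 b0 s u : C) :
 - ((- A - B) / 2%:R) - s / 2%:R = (a0 + b0) / 2%:R - s / 2%:R ->
 (A - B) / 2%:R - u / 2%:R = (a0 - b0) / 2%:R - u / 2%:R -> A = a0 /\ B = b0.
Proof.
have two0 : (2%:R : C) != 0 by rewrite pnatr_eq0.
move=> h1 h2.
have e1 : A + B = 2%:R * (- ((- A - B) / 2%:R) - s / 2%:R + s / 2%:R) by field.
have e2 : A - B = 2%:R * ((A - B) / 2%:R - u / 2%:R + u / 2%:R) by field.
rewrite h1 in e1; rewrite h2 in e2.
split.
  transitivity (((A + B) + (A - B)) / 2%:R); first by field.
  by rewrite e1 e2; field.
transitivity (((A + B) - (A - B)) / 2%:R); first by field.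
by rewrite e1 e2; field.
Qed.
End Cj.

Theorem proposition5p1 (C : numClosedFieldType) (Th1 Th2 a b : fn C) :
  (* zweibein data: nowhere vanishing, compatibility *)
  (forall x, Th1 x != 0) -> (forall x, Th2 x != 0) ->
  (forall x, Th1 x * R1 Th2 x = Th2 x * R2 Th1 x) ->
  (* reality of theta *)
  (forall x, (Th1 x)^* = R1 Th1 x) -> (forall x, (Th2 x)^* = R2 Th2 x) ->
  (* torsion-free cotorsion-free: (R1 + R2) a = (R1 + R2) b = 0 *)
  (forall x, R1 a x + R2 a x = 0) -> (forall x, R1 b x + R2 b x = 0) ->
  [/\ form_star (conn_A1 Th1 Th2 a b) = conn_A3 Th1 Th2 a b <->
        ((forall x, (a x)^* = R2 a x) /\ (forall x, (b x)^* = R1 b x)),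
      ((forall x, (a x)^* = R2 a x) /\ (forall x, (b x)^* = R1 b x)) ->
        forall x, (regularity Th1 Th2 a b x)^* =
                  - R1 (R2 (regularity Th1 Th2 a b)) x,
      ((forall x, (a x)^* = R2 a x) /\ (forall x, (b x)^* = R1 b x)) ->
        forall x, (Rfun Th1 Th2 a b x)^* =
          Rfun Th1 Th2 a b x
          + dbar1 (fun y => d1 Th1 b y + s1 Th1 y * R1 b y) x
          + dbar2 (fun y => d2 Th2 a y + s2 Th2 y * R2 a y) x
    & ((forall x, (a x)^* = R2 a x) /\ (forall x, (b x)^* = R1 b x)) ->
        (\sum_(x : Sigma) Rfun Th1 Th2 a b x) \is Num.real].
Proof.
move=> _ _ _ hT1 hT2 ha hb.
have ha' : forall i j, a (i + 1, j) = - a (i, j + 1).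
  by move=> i j; apply/eqP; rewrite -subr_eq0 opprK; apply/eqP; exact: (ha (i, j)).
have hb' : forall i j, b (i, j + 1) = - b (i + 1, j).
  by move=> i j; apply/eqP; rewrite -subr_eq0 opprK addrC; apply/eqP; exact: (hb (i, j)).
have hT1' : forall i j, (Th1 (i, j))^* = Th1 (i + 1, j) by move=> i j; exact: hT1 (i, j).
have hT2' : forall i j, (Th2 (i, j))^* = Th2 (i, j + 1) by move=> i j; exact: hT2 (i, j).
have hT1'' : forall i j, (Th1 (i + 1, j))^* = Th1 (i, j).
  by move=> i j; rewrite hT1' z2_11.
have hT2'' : forall i j, (Th2 (i, j + 1))^* = Th2 (i, j).
  by move=> i j; rewrite hT2' z2_11.
have two0 : (2%:R : C) != 0 by rewrite pnatr_eq0.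
have P3 : ((forall x, (a x)^* = R2 a x) /\ (forall x, (b x)^* = R1 b x)) ->
        forall x, (Rfun Th1 Th2 a b x)^* =
          Rfun Th1 Th2 a b x
          + dbar1 (fun y => d1 Th1 b y + s1 Th1 y * R1 b y) x
          + dbar2 (fun y => d2 Th2 a y + s2 Th2 y * R2 a y) x.
  case=> hac hbc [i j].
  have hac2 : forall i j, (a (i, j))^* = a (i, j + 1) by move=> i' j'; exact: hac (i', j').
  have hbc2 : forall i j, (b (i, j))^* = b (i + 1, j) by move=> i' j'; exact: hbc (i', j').
  rewrite /Rfun /d1 /d2 /s1 /s2 /dbar1 /dbar2 /R1 /R2 /=.
  rewrite !(cjB, cjM, cjD, cjn) ?hac2 ?hbc2 ?hT1' ?hT2' ?z2_11 ?ha' ?hb' ?z2_11.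
  ring.
split.
- split.
  + move=> E.
    have e1 : forall i j, R1 (fconj (conn_A1 Th1 Th2 a b).1) (i, j) = (conn_A3 Th1 Th2 a b).1 (i, j).
      by move=> i j; rewrite -E.
    have e2 : forall i j, R2 (fconj (conn_A1 Th1 Th2 a b).2) (i, j) = (conn_A3 Th1 Th2 a b).2 (i, j).
      by move=> i j; rewrite -E.
    have k : forall i j, (a (i, j + 1))^* = a (i, j) /\ (b (i + 1, j))^* = b (i, j).
      move=> i j; move: (e1 i j) (e2 i j).
      rewrite /R1 /R2 /fconj /conn_A1 /conn_A3 /alpha /beta /s1 /s2 /dbar1 /dbar2 /R1 /R2 /=.
      rewrite ?ha' ?hb' !(cjn, cj1, cjB, cjM, cjD, cjN, cjV) ?z2_11 ?hT1'' ?hT2''.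
      exact: solve_ab.
    split=> -[i j].
      by have [h _] := k i (j + 1); rewrite z2_11 in h; rewrite /R2 /= h.
    by have [_ h] := k (i + 1) j; rewrite z2_11 in h; rewrite /R1 /= h.
  + case=> hac hbc.
    have hac2 : forall i j, (a (i, j))^* = a (i, j + 1) by move=> i' j'; exact: hac (i', j').
    have hbc2 : forall i j, (b (i, j))^* = b (i + 1, j) by move=> i' j'; exact: hbc (i', j').
    rewrite /form_star /conn_A1 /conn_A3 /=.
    congr pair; apply: functional_extensionality => -[i j];
      rewrite /R1 /R2 /fconj /alpha /beta /s1 /s2 /dbar1 /dbar2 /R1 /R2 /=;
      rewrite ?ha' ?hb' !(cjn, cj1, cjB, cjM, cjD, cjN, cjV) ?z2_11 ?hT1'' ?hT2'' ?hac2 ?hbc2 ?z2_11;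
      by field.
- case=> hac hbc [i j].
  have hac2 : forall i j, (a (i, j))^* = a (i, j + 1) by move=> i' j'; exact: hac (i', j').
  have hbc2 : forall i j, (b (i, j))^* = b (i + 1, j) by move=> i' j'; exact: hbc (i', j').
  rewrite /regularity /R1 /R2 /s1 /s2 /dbar1 /dbar2 /R1 /R2 /=.
  rewrite !(cjB, cjM) !hac2 !hbc2 !hT1' !hT2' !z2_11 !ha' !hb' !z2_11.
  ring.
- exact: P3.
- case=> hac hbc.
  apply/CrealP; rewrite cjsum.
  rewrite (eq_bigr _ (fun x _ => P3 (conj hac hbc) x)) big_split big_split /=.
  by rewrite sum_dbar1 sum_dbar2 !addr0.
Qed.
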